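(* Let $m = p + 12k$ with $k \geq 0$ an integer and $p \in \{11,13,17,19\}$. If $G_{2m}$ admits three type-2 basic sets of dipaths and two type-1 basic sets of dipaths such that all the dipaths and directed cycles appearing in these five sets (32 in total) are pairwise arc-disjoint, then $G_{2m}$ admits a $\vec{C}_m$-factorization.
   Context: Let $m$ be odd. $G_{2m} = \vec{X}(m,\{1,3\}) \wr K^*_2$ is the digraph with vertex set $\{x_a, y_a : a \in \mathbb{Z}_m\}$ whose arcs are: $(u_a, v_b)$ for all $u,v \in \{x,y\}$ and $a,b$ with $b-a \equiv 1$ or $3 \pmod m$, together with $(x_a,y_a)$ and $(y_a,x_a)$ for all $a$. An arc from a vertex with subscript $a$ to one with subscript $b$ has difference equal to the representative of $b-a$ in $\{0,\dots,m-1\}$; a type-$k$ cycle is a directed $m$-cycle whose arc differences sum (as integers) to $km$. $\rho$ sends $x_i\mapsto x_{i+1}$, $y_i\mapsto y_{i+1}$ (mod $m$). For a dipath $P$: $s(P)$, $t(P)$, $\mathrm{len}(P)$ are its first vertex, last vertex and number of arcs; a dipath of length $0$ is a single vertex. $V_0=\{x_j,y_j: 0\le j\le p-1\}$ and $V_i=\{x_j,y_j: p+12(i-1)\le j\le p+12i-1\}$ for $1\le i\le k$. Type-2 basic set: an 8-tuple $(W,X,Y,Z,Q,R,S,T)$ of dipaths with (C1) $Q,R,S,T$ pairwise vertex-disjoint; if $k\ge1$ then $W,X,Y,Z$ pairwise vertex-disjoint, and if $k=0$ then $WX$, $YZ$ are vertex-disjoint type-2 directed cycles; (C2) $s(X)=\rho^{-p}(t(W))$,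 $s(W)=\rho^{-p}(t(X))$, $s(Z)=\rho^{-p}(t(Y))$, $s(Y)=\rho^{-p}(t(Z))$; (C3) $\mathrm{len}(W)+\mathrm{len}(X)=\mathrm{len}(Y)+\mathrm{len}(Z)=p$, and $\mathrm{len}(Q)+\mathrm{len}(R)=\mathrm{len}(S)+\mathrm{len}(T)=12$ if $k\ge1$, all four of length $0$ if $k=0$; (C4) each of $W,X,Y,Z$ has source and internal vertices in $V_0$ and terminal vertex $x_t$ or $y_t$ with $t\in\{p,p+1,p+2\}$; (C5) $t(W)=s(Q)$, $t(X)=s(R)$, $t(Y)=s(S)$, $t(Z)=s(T)$; (C6) if $k\ge1$ and $P\in\{Q,R,S,T\}$ has $s(P)=x_t$ (resp. $y_t$) then $t(P)=x_{t+12}$ (resp. $y_{t+12}$) and all internal vertices of $P$ lie in $V_1$. Type-1 basic set: a 4-tuple $(X,Y,R,S)$ with (C1) $R,S$ vertex-disjoint; if $k\ge1$ then $X,Y$ are vertex-disjoint dipaths, and if $k=0$ they are vertex-disjoint type-1 directed cycles; (C2) $s(X)=\rho^{-p}(t(X))$, $s(Y)=\rho^{-p}(t(Y))$; (C3) $\mathrm{len}(X)=\mathrm{len}(Y)=p$, and $\mathrm{len}(R)=\mathrm{len}(S)=12$ if $k\ge1$, $0$ if $k=0$; (C4) each of $X,Y$ has source and internal vertices in $V_0$ and terminal vertex $x_t$ or $y_t$ with $t\in\{p,p+1,p+2\}$; (C5) $t(X)=s(R)$, $t(Y)=s(S)$; (C6) if $k\ge1$ and $P\in\{R,S\}$ has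 $s(P)=x_t$ (resp. $y_t$) then $t(P)=x_{t+12}$ (resp. $y_{t+12}$) and all internal vertices of $P$ lie in $V_1$. A $\vec{C}_m$-factor is a spanning subdigraph that is a disjoint union of directed $m$-cycles; a $\vec{C}_m$-factorization is a partition of the arc set into $\vec{C}_m$-factors. *)

(* Defs.v *)
From mathcomp Require Import all_boot.
Set Implicit Arguments. Unset Strict Implicit. Unset Printing Implicit Defensive.

(* Vertices of G_{2m}: (false, a) is x_a, (true, a) is y_a; a valid vertex has a < m. *)
Definition vtx := (bool * nat)%type.
Definition is_vtx (m : nat) (v : vtx) : bool := v.2 < m.

Definition dif (m : nat) (u v : vtx) : nat := (v.2 + m - u.2) %% m.

(* arc relation of G_{2m} = X(m,{1,3}) wr K_2^* *)
Definition garc (m : nat) (u v : vtx) : bool :=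
  [&& is_vtx m u, is_vtx m v &
      [|| dif m u v == 1, dif m u v == 3 | (u.2 == v.2) && (u.1 != v.1)]].

(* A dipath / closed walk is given by its vertex sequence; its arcs are consecutive pairs. *)
Definition parcs (P : seq vtx) : seq (vtx * vtx) := zip P (behead P).
Definition len (P : seq vtx) : nat := (size P).-1.
Definition olast (P : seq vtx) : option vtx := ohead (rev P).
Definition internal (P : seq vtx) : seq vtx := drop 1 (take (size P).-1 P).
Definition nonterminal (P : seq vtx) : seq vtx := take (size P).-1 P.

(* directed path (no repeated vertex) in G_{2m}; length 0 = single vertex *)
Definition dipath (m : nat) (P : seq vtx) : bool :=
  if P is x :: q then [&& is_vtx m x, path (garc m) x q & uniq P] else false.

(* directed m-cycle, given as a closed walk x_0 x_1 ... x_m with x_m = x_0 *)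
Definition mcycle (m : nat) (C : seq vtx) : bool :=
  if C is x :: q then [&& path (garc m) x q, last x q == x, uniq q & size q == m]
  else false.

Definition arcsum (m : nat) (P : seq vtx) : nat := sumn [seq dif m a.1 a.2 | a <- parcs P].

Definition typed_cycle (m k : nat) (C : seq vtx) : bool :=
  mcycle m C && (arcsum m C == k * m).

(* concatenation of two walks W, X with t(W) = s(X) *)
Definition pcat (W X : seq vtx) : seq vtx := W ++ behead X.

Definition rho_inv (m j : nat) (v : vtx) : vtx := (v.1, (v.2 + (m - j %% m)) %% m).
Definition shift12 (m : nat) (v : vtx) : vtx := (v.1, (v.2 + 12) %% m).

Definition inV0 (p : nat) (v : vtx) : bool := v.2 < p.
Definition inV1 (p : nat) (v : vtx) : bool := (p <= v.2) && (v.2 < p + 12).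

Definition vdisj (P Q : seq vtx) : bool := ~~ has (mem Q) P.
Definition pw_vdisj (l : seq (seq vtx)) : bool := pairwise vdisj l.

Definition C4 (m p : nat) (P : seq vtx) : bool :=
  all (inV0 p) (nonterminal P) &&
  if olast P is Some v then v.2 \in [:: p %% m; (p + 1) %% m; (p + 2) %% m] else false.

Definition C6 (m p : nat) (P : seq vtx) : bool :=
  (olast P == omap (shift12 m) (ohead P)) && all (inV1 p) (internal P).

Record basic2 := Basic2 { bW : seq vtx; bX : seq vtx; bY : seq vtx; bZ : seq vtx;
                          bQ : seq vtx; bR : seq vtx; bS : seq vtx; bT : seq vtx }.
Record basic1 := Basic1 { cX : seq vtx; cY : seq vtx; cR : seq vtx; cS : seq vtx }.

Definition objs2 (B : basic2) : seq (seq vtx) :=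
  [:: bW B; bX B; bY B; bZ B; bQ B; bR B; bS B; bT B].
Definition objs1 (B : basic1) : seq (seq vtx) := [:: cX B; cY B; cR B; cS B].

Definition type2_basic (m p k : nat) (B : basic2) : Prop :=
  let: Basic2 W0 X0 Y0 Z0 Q0 R0 S0 T0 := B in
  (all (dipath m) [:: Q0; R0; S0; T0] /\ pw_vdisj [:: Q0; R0; S0; T0]) /\
  [/\
      (if 1 <= k then all (dipath m) [:: W0; X0; Y0; Z0] && pw_vdisj [:: W0; X0; Y0; Z0]
       else [&& typed_cycle m 2 (pcat W0 X0), typed_cycle m 2 (pcat Y0 Z0)
              & vdisj (pcat W0 X0) (pcat Y0 Z0)]),
      [/\ ohead X0 = omap (rho_inv m p) (olast W0), ohead W0 = omap (rho_inv m p) (olast X0),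
          ohead Z0 = omap (rho_inv m p) (olast Y0) & ohead Y0 = omap (rho_inv m p) (olast Z0)],
      len W0 + len X0 = p /\ len Y0 + len Z0 = p /\
      (if 1 <= k then len Q0 + len R0 = 12 /\ len S0 + len T0 = 12
       else [/\ len Q0 = 0, len R0 = 0, len S0 = 0 & len T0 = 0]),
      all (C4 m p) [:: W0; X0; Y0; Z0] &
      [/\ olast W0 = ohead Q0, olast X0 = ohead R0, olast Y0 = ohead S0 & olast Z0 = ohead T0] /\
      (1 <= k -> all (C6 m p) [:: Q0; R0; S0; T0])].

Definition type1_basic (m p k : nat) (B : basic1) : Prop :=
  let: Basic1 X0 Y0 R0 S0 := B in
  (all (dipath m) [:: R0; S0] /\ vdisj R0 S0) /\
  [/\
      (if 1 <= k then [&& dipath m X0, dipath m Y0 & vdisj X0 Y0]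
       else [&& typed_cycle m 1 X0, typed_cycle m 1 Y0 & vdisj X0 Y0]),
      ohead X0 = omap (rho_inv m p) (olast X0) /\ ohead Y0 = omap (rho_inv m p) (olast Y0),
      len X0 = p /\ len Y0 = p /\
      (if 1 <= k then len R0 = 12 /\ len S0 = 12 else len R0 = 0 /\ len S0 = 0),
      all (C4 m p) [:: X0; Y0] &
      (olast X0 = ohead R0 /\ olast Y0 = ohead S0) /\
      (1 <= k -> all (C6 m p) [:: R0; S0])].

Definition Gverts (m : nat) : seq vtx :=
  [seq (b, i) | b <- [:: false; true], i <- iota 0 m].
Definition Garcs (m : nat) : seq (vtx * vtx) :=
  [seq a <- [seq (u, v) | u <- Gverts m, v <- Gverts m] | garc m a.1 a.2].

Definition Cm_factor (m : nat) (F : seq (seq vtx)) : bool :=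
  all (mcycle m) F && perm_eq (flatten [seq behead C | C <- F]) (Gverts m).

Definition Cm_factorization (m : nat) (FF : seq (seq (seq vtx))) : bool :=
  all (Cm_factor m) FF &&
  perm_eq (flatten [seq flatten [seq parcs C | C <- F] | F <- FF]) (Garcs m).

(* Main.v *)
Require Import Defs.
From mathcomp Require Import all_boot zify.
Set Implicit Arguments. Unset Strict Implicit. Unset Printing Implicit Defensive.

Lemma parcs_pcat P Q : ohead Q = olast P -> parcs (pcat P Q) = parcs P ++ parcs Q.
Proof.
case: Q => [|q Q].
  by case/lastP: P => // P x; rewrite /olast rev_rcons.
case/lastP: P => [//|P x]; rewrite /olast rev_rcons /= => -[<-].
rewrite /pcat /=; elim: P => [|a P IH] //=.
case: P IH => [|b P] IH /=; first by rewrite /parcs.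
by rewrite /parcs /= in IH *; rewrite IH.
Qed.

Lemma olast_cons x s : olast (x :: s) = Some (last x s).
Proof. by rewrite /olast lastI rev_rcons. Qed.

Lemma olast_pcat P Q : ohead Q = olast P -> olast (pcat P Q) = olast Q.
Proof.
case: Q => [|q Q] /=; first by case: P => //= x s; rewrite olast_cons.
case: P => [|x P] //; rewrite olast_cons => -[->].
case: Q => [|y Q]; rewrite /pcat /= ?cats0 !olast_cons //.
by rewrite last_cat.
Qed.

Lemma ohead_pcat P Q : P != [::] -> ohead (pcat P Q) = ohead P.
Proof. by case: P. Qed.

Lemma behead_pcat P Q : P != [::] -> behead (pcat P Q) = behead P ++ behead Q.
Proof. by case: P. Qed.

Definition catw (Ps : seq (seq vtx)) : seq vtx := foldr pcat [::] Ps.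
Definition lk (P Q : seq vtx) : bool := ohead Q == olast P.

Lemma catw_facts P0 Ps : all (fun P => P != [::]) (P0 :: Ps) -> path lk P0 Ps ->
  [/\ parcs (catw (P0 :: Ps)) = flatten (map parcs (P0 :: Ps)),
      ohead (catw (P0 :: Ps)) = ohead P0,
      olast (catw (P0 :: Ps)) = olast (last P0 Ps) &
      behead (catw (P0 :: Ps)) = flatten (map behead (P0 :: Ps))].
Proof.
elim: Ps P0 => [|P1 Ps IH] P0 /=.
  by move=> /andP[nz _] _; rewrite /catw /= /pcat /= !cats0.
move=> /and3P[nz0 nz1 nzs] /andP[/eqP l01 pth].
have [IH1 IH2 IH3 IH4] := IH P1 (introT andP (conj nz1 nzs)) pth.
rewrite /catw /= -/(catw (P1 :: Ps)).
have hl : ohead (catw (P1 :: Ps)) = olast P0 by rewrite IH2.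
split.
- by rewrite parcs_pcat // IH1.
- by rewrite ohead_pcat.
- by rewrite olast_pcat // IH3.
- by rewrite behead_pcat // IH4.
Qed.

Lemma nt_cons x s : nonterminal (x :: s) = belast x s.
Proof.
by rewrite /nonterminal /= lastI -cats1 take_size_cat // size_belast.
Qed.

Lemma rot_catw x0 P0 Ps : ohead P0 = Some x0 -> all (fun P => P != [::]) (P0 :: Ps) ->
  path lk P0 Ps ->
  exists xl, olast (last P0 Ps) = Some xl /\
    x0 :: flatten (map behead (P0 :: Ps)) = flatten (map nonterminal (P0 :: Ps)) ++ [:: xl].
Proof.
elim: Ps x0 P0 => [|P1 Ps IH] x0 [|y P0] //= [<-].
  move=> _ _; exists (last y P0); rewrite olast_cons nt_cons cats0.
  by rewrite cats0 cats1 -lastI.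
move=> /andP[nz1 nzs] /andP[/eqP l01 pth].
rewrite olast_cons in l01.
have [xl [h1 h2]] := IH (last y P0) P1 l01 (introT andP (conj nz1 nzs)) pth.
exists xl; split => //.
by rewrite nt_cons -catA -h2 /= -cat_rcons -lastI.
Qed.

Definition tr (m j : nat) (v : vtx) : vtx := (v.1, (v.2 + j) %% m).
Definition trarc (m j : nat) (a : vtx * vtx) := (tr m j a.1, tr m j a.2).

Lemma parcs_map (f : vtx -> vtx) P :
  parcs (map f P) = map (fun a => (f a.1, f a.2)) (parcs P).
Proof. by rewrite /parcs; elim: P => //= x [|y P] //= ->. Qed.

Lemma nt_map (f : vtx -> vtx) P : nonterminal (map f P) = map f (nonterminal P).
Proof. by rewrite /nonterminal map_take size_map. Qed.

Lemma olast_map (f : vtx -> vtx) P : olast (map f P) = omap f (olast P).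
Proof. by rewrite /olast -map_rev; case: (rev P). Qed.

Lemma ohead_map (f : vtx -> vtx) P : ohead (map f P) = omap f (ohead P).
Proof. by case: P. Qed.

Lemma tr_tr m a b v : tr m a (tr m b v) = tr m (b + a) v.
Proof. by rewrite /tr /= modnDml addnA. Qed.

Lemma tr0 m v : v.2 < m -> tr m 0 v = v.
Proof. by case: v => b x /= h; rewrite /tr /= addn0 modn_small. Qed.

Lemma dif_spec m u v : u.2 < m -> (u.2 + dif m u v) %% m = v.2 %% m.
Proof.
move=> h; rewrite /dif modnDmr.
have -> : u.2 + (v.2 + m - u.2) = v.2 + m by lia.
by rewrite modnDr.
Qed.

Lemma dif_uniq m u v d : u.2 < m -> d < m -> (u.2 + d) %% m = v.2 %% m -> dif m u v = d.
Proof.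
move=> hu hd e.
have e2 : (u.2 + dif m u v) %% m = (u.2 + d) %% m by rewrite dif_spec // e.
move: e2 => /eqP; rewrite eqn_modDl => /eqP.
by rewrite (modn_small hd) modn_small // /dif ltn_pmod //; lia.
Qed.

Lemma garc_valid m u v : garc m u v -> u.2 < m /\ v.2 < m.
Proof. by case/and3P. Qed.

Lemma dif_tr m j u v : u.2 < m -> dif m (tr m j u) (tr m j v) = dif m u v.
Proof.
move=> hu; have m0 : 0 < m by lia.
apply: dif_uniq; first by rewrite /tr /= ltn_pmod.
  by rewrite /dif ltn_pmod.
rewrite /tr /= modnDml modn_mod.
have -> : u.2 + j + dif m u v = (u.2 + dif m u v) + j by lia.
by rewrite -modnDml dif_spec // modnDml.
Qed.

Lemma garc_tr m j u v : garc m u v -> garc m (tr m j u) (tr m j v).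
Proof.
move=> g; have [hu hv] := garc_valid g; have m0 : 0 < m by lia.
move: g; rewrite /garc /is_vtx dif_tr // /tr /= !ltn_pmod //=.
case/and3P=> _ _ /or3P[->|->|] //; rewrite ?orbT //.
by case/andP=> /eqP -> ->; rewrite eqxx !orbT.
Qed.

Lemma ptr (T : eqType) (a b c : seq T) : perm_eq a b -> perm_eq b c -> perm_eq a c.
Proof. exact: perm_trans. Qed.

Section Blocks.
Variable T : eqType.
Variable f : nat -> T -> T.

Definition Flg (s : seq nat) (q : seq T) := flatten [seq map (f i) q | i <- s].
Definition Fl k q := Flg (iota 0 k) q.
Definition BL k (l b q : seq T) := perm_eq l (b ++ Fl k q).

Lemma Flg_cat s q1 q2 : perm_eq (Flg s (q1 ++ q2)) (Flg s q1 ++ Flg s q2).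
Proof.
rewrite /Flg; elim: s => //= i s IH; rewrite map_cat -catA.
rewrite -catA perm_cat2l.
have := perm_cat (perm_refl [seq f i i0 | i0 <- q2]) IH.
move/ptr; apply; by rewrite perm_catCA.
Qed.

Lemma Flg_nil s : Flg s [::] = [::].
Proof. by rewrite /Flg; elim: s. Qed.

Lemma size_Flg s q : size (Flg s q) = size s * size q.
Proof. by rewrite /Flg; elim: s => //= i s IH; rewrite size_cat size_map IH mulSn. Qed.

Lemma mem_Flg s q x : x \in Flg s q -> exists2 i, i \in s & exists2 y, y \in q & x = f i y.
Proof.
rewrite /Flg; elim: s => //= i s IH; rewrite mem_cat => /orP[/mapP[y yq ->]|/IH[j js h]].
  by exists i; rewrite ?inE ?eqxx //; exists y.
by exists j; rewrite // inE js orbT.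
Qed.

Lemma BL_cat k l1 b1 q1 l2 b2 q2 : BL k l1 b1 q1 -> BL k l2 b2 q2 ->
  BL k (l1 ++ l2) (b1 ++ b2) (q1 ++ q2).
Proof.
rewrite /BL => h1 h2; apply: ptr (perm_cat h1 h2) _.
rewrite perm_catACA perm_cat2l perm_sym /Fl; exact: Flg_cat.
Qed.

Lemma BL_base k l : BL k l l [::].
Proof. by rewrite /BL /Fl Flg_nil cats0. Qed.

Lemma BL_rep k q : BL k (Fl k q) [::] q.
Proof. by rewrite /BL. Qed.

Lemma BL_perm k l l' b q : perm_eq l l' -> BL k l' b q -> BL k l b q.
Proof. by move=> h1 h2; apply: ptr h1 h2. Qed.

Lemma size_BL k l b q : BL k l b q -> size l = size b + k * size q.
Proof. by move/perm_size=> ->; rewrite size_cat /Fl size_Flg size_iota. Qed.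

Variable key : T -> nat.

Lemma uniq_Flg s q : uniq s -> uniq q ->
  (forall i, i \in s -> {in q &, injective (f i)}) ->
  (forall i x, i \in s -> x \in q -> key (f i x) = i.+1) -> uniq (Flg s q).
Proof.
elim: s => [|i s IH]; first by rewrite /Flg.
move=> /andP[ins us] uq hinj hkey.
rewrite [Flg _ _]/Flg /= -/(Flg s q).
rewrite cat_uniq map_inj_in_uniq; last by apply: hinj; rewrite inE eqxx.
rewrite uq /=.
rewrite IH //; last first.
- by move=> j x js xq; rewrite hkey // inE js orbT.
- by move=> j js; apply: hinj; rewrite inE js orbT.
rewrite andbT; apply/hasPn => x; case/mem_Flg => j js [y yq ->].
apply/negP => /mapP [z zq e].
have := hkey j y; rewrite inE js orbT => /(_ isT yq).
rewrite e hkey ?inE ?eqxx // => -[ij]; by move: ins; rewrite ij js.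
Qed.

Lemma uniq_blocks k b q : uniq b -> uniq q -> all (fun x => key x == 0) b ->
  (forall i, i < k -> {in q &, injective (f i)}) ->
  (forall i x, i < k -> x \in q -> key (f i x) = i.+1) -> uniq (b ++ Fl k q).
Proof.
move=> ub uq kb hinj hkey; rewrite cat_uniq ub /=.
rewrite uniq_Flg ?iota_uniq //; last first.
- by move=> i x; rewrite mem_iota add0n => /andP[_ h]; apply: hkey.
- by move=> i; rewrite mem_iota add0n => /andP[_ h]; apply: hinj.
rewrite andbT; apply/hasPn => x; case/mem_Flg => i; rewrite mem_iota add0n => /andP[_ ik] [y yq ->].
apply/negP => /(allP kb); by rewrite hkey.
Qed.

End Blocks.

Lemma Gverts_eq m : Gverts m = [seq (false, i) | i <- iota 0 m] ++ [seq (true, i) | i <- iota 0 m].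
Proof. by rewrite /Gverts /= cats0. Qed.

Lemma mem_Gverts m v : (v \in Gverts m) = is_vtx m v.
Proof.
case: v => b i; rewrite Gverts_eq mem_cat /is_vtx /=.
case: b; rewrite /= ?orbF.
- apply/idP/idP => [/orP[/mapP[j _ //]|/mapP[j]]|h]; first by rewrite mem_iota => ? [->].
  by apply/orP; right; apply/mapP; exists i; rewrite // mem_iota.
- apply/idP/idP => [/orP[/mapP[j]|/mapP[j _ //]]|h]; first by rewrite mem_iota => ? [->].
  by apply/orP; left; apply/mapP; exists i; rewrite // mem_iota.
Qed.

Lemma uniq_Gverts m : uniq (Gverts m).
Proof.
rewrite Gverts_eq cat_uniq !map_inj_uniq ?iota_uniq //; try by move=> x y [].
rewrite /= andbT; apply/hasPn => v /mapP[j _ ->]; apply/negP => /mapP[i _] //.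
Qed.

Lemma size_Gverts m : size (Gverts m) = 2 * m.
Proof. by rewrite Gverts_eq size_cat !size_map size_iota; lia. Qed.

Lemma Garcs_eq m : Garcs m =
  [seq a <- flatten [seq [seq (u, v) | v <- Gverts m] | u <- Gverts m] | garc m a.1 a.2].
Proof. by []. Qed.

Lemma garc_vtx m u v : garc m u v -> is_vtx m u && is_vtx m v.
Proof. by case/and3P=> -> ->. Qed.

Lemma mem_Garcs m a : (a \in Garcs m) = garc m a.1 a.2.
Proof.
rewrite Garcs_eq mem_filter; case g: (garc m a.1 a.2) => //=.
case/andP: (garc_vtx g); rewrite -!mem_Gverts => h1 h2.
apply/flattenP; exists [seq (a.1, v) | v <- Gverts m]; first by apply/mapP; exists a.1.
by apply/mapP; exists a.2 => //; case: a {g h1 h2}.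
Qed.

Lemma uniq_pairs (s t : seq vtx) : uniq s -> uniq t ->
  uniq (flatten [seq [seq (u, v) | v <- t] | u <- s]).
Proof.
move=> + ut; elim: s => //= u s IH /andP[us ss].
rewrite cat_uniq IH // map_inj_uniq //; last by move=> x y [].
rewrite ut andbT; apply/hasPn => a /flattenP[l /mapP[w ws ->]] /mapP[v _ ->].
by apply/negP => /mapP[z _ [e _]]; move: us; rewrite -e ws.
Qed.

Lemma uniq_Garcs m : uniq (Garcs m).
Proof. by rewrite Garcs_eq filter_uniq // uniq_pairs // uniq_Gverts. Qed.

Definition hcnt (b : bool) (d : nat) : bool := [|| d == 1, d == 3 | (d == 0) && b].

Lemma garc_hcnt m u b j : is_vtx m u -> j < m ->
  garc m u (b, j) = hcnt (u.1 != b) (dif m u (b, j)).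
Proof.
move=> hu hj; rewrite /garc hu /is_vtx /= hj /hcnt /=.
congr [|| _, _ | _].
case: (u.1 != b); rewrite ?andbT ?andbF //.
apply/eqP/eqP => [<-|h]; first by apply: dif_uniq => //=; [lia | rewrite addn0].
have := dif_spec (b, j) hu; rewrite h addn0 !modn_small //.
Qed.

Lemma perm_dif m u b : is_vtx m u ->
  perm_eq [seq dif m u (b, j) | j <- iota 0 m] (iota 0 m).
Proof.
move=> hu.
have U : uniq [seq dif m u (b, j) | j <- iota 0 m].
  rewrite map_inj_in_uniq ?iota_uniq // => x y; rewrite !mem_iota !add0n /= => hx hy e.
  have := dif_spec (b, x) hu; have := dif_spec (b, y) hu.
  by rewrite e /= => -> ; rewrite !modn_small.
have hs : {subset [seq dif m u (b, j) | j <- iota 0 m] <= iota 0 m}.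
  move=> d /mapP[j _ ->]; rewrite mem_iota add0n /dif ltn_pmod //.
  by move: hu; rewrite /is_vtx; lia.
have [_ e] := uniq_min_size U hs (eq_leq (esym (size_map _ _))).
by apply: uniq_perm; rewrite ?iota_uniq.
Qed.

Lemma count_hcnt m b : 3 < m -> count (hcnt b) (iota 0 m) = 2 + b.
Proof.
move=> h; rewrite -(subnKC h) iotaD count_cat.
have -> : count (hcnt b) (iota (0 + 4) (m - 4)) = 0.
  apply/eqP; rewrite -leqn0 leqNgt -has_count; apply/hasPn => d.
  by rewrite mem_iota /hcnt; case: d => [|[|[|[|d]]]].
by case: b.
Qed.

Lemma count_garc m u : 3 < m -> is_vtx m u -> count (garc m u) (Gverts m) = 5.
Proof.
move=> hm hu; rewrite Gverts_eq count_cat !count_map.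
have e : forall b, count (preim (pair b) (garc m u)) (iota 0 m) = 2 + (u.1 != b).
  move=> b; rewrite -(count_hcnt (u.1 != b) hm).
  rewrite -((permP (perm_dif b hu)) (hcnt (u.1 != b))) count_map.
  apply: eq_in_count => j; rewrite mem_iota add0n => /andP[_ hj] /=.
  by rewrite garc_hcnt.
rewrite !e; by case: (u.1).
Qed.

Lemma size_Garcs m : 3 < m -> size (Garcs m) = 10 * m.
Proof.
move=> hm; rewrite Garcs_eq size_filter count_flatten -map_comp.
have gen : forall s, all (is_vtx m) s ->
  sumn [seq (count (fun a : vtx * vtx => garc m a.1 a.2) \o (fun u => [seq (u, v) | v <- Gverts m])) i | i <- s] = 5 * size s.
  elim=> //= u s IH /andP[hu hs].
  by rewrite IH // count_map count_garc // mulnS.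
rewrite gen ?size_Gverts; first lia.
by apply/allP => v; rewrite mem_Gverts.
Qed.

Lemma path_all (e : rel vtx) x q : path e x q = all (fun a => e a.1 a.2) (parcs (x :: q)).
Proof. by elim: q x => //= y q IH x; rewrite IH. Qed.

Lemma path_vtx m x q : path (garc m) x q -> all (is_vtx m) q.
Proof. elim: q x => //= y q IH x /andP[/garc_vtx/andP[_ ->] /IH]. by []. Qed.

Lemma size_parcs C : size (parcs C) = size (behead C).
Proof. rewrite /parcs size_zip size_behead; case: C => //= _ s; lia. Qed.

Lemma mcycle_facts m C : mcycle m C ->
  [/\ all (fun a => garc m a.1 a.2) (parcs C), size (parcs C) = m, uniq (behead C),
      size (behead C) = m & all (is_vtx m) (behead C)].
Proof.
case: C => // x q /and4P[pth _ uq /eqP sq].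
by rewrite size_parcs /= -path_all pth uq sq (path_vtx pth).
Qed.

Lemma mcycleP m C : C != [::] -> all (fun a => garc m a.1 a.2) (parcs C) ->
  olast C = ohead C -> uniq (behead C) -> size (behead C) = m -> mcycle m C.
Proof.
case: C => // x q _ ha; rewrite olast_cons /= => -[->] uq sq.
by rewrite path_all ha uq sq !eqxx.
Qed.

Lemma factor2 m C1 C2 : mcycle m C1 -> mcycle m C2 -> uniq (behead C1 ++ behead C2) ->
  Cm_factor m [:: C1; C2].
Proof.
move=> h1 h2 u; rewrite /Cm_factor /= h1 h2 /= cats0.
have [_ _ _ s1 v1] := mcycle_facts h1; have [_ _ _ s2 v2] := mcycle_facts h2.
have hs : {subset behead C1 ++ behead C2 <= Gverts m}.
  by move=> v; rewrite mem_Gverts mem_cat => /orP[/(allP v1)|/(allP v2)].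
have hz : size (Gverts m) <= size (behead C1 ++ behead C2) by rewrite size_cat s1 s2 size_Gverts; lia.
have [_ e] := uniq_min_size u hs hz.
by apply: uniq_perm => //; apply: uniq_Gverts.
Qed.

Definition TA (FF : seq (seq (seq vtx))) := flatten [seq flatten [seq parcs C | C <- F] | F <- FF].

Lemma final m FF : 3 < m -> size FF = 5 -> all (fun F => size F == 2) FF ->
  all (Cm_factor m) FF -> uniq (TA FF) -> Cm_factorization m FF.
Proof.
move=> hm s5 s2 hf u; rewrite /Cm_factorization hf /= -/(TA FF).
have facts : forall F C, F \in FF -> C \in F -> mcycle m C.
  by move=> F C /(allP hf) /andP[/allP h _] /h.
have hs : {subset TA FF <= Garcs m}.
  move=> a /flattenP[l /mapP[F FF' ->]] /flattenP[l' /mapP[C CF ->]] ha.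
  have [g _ _ _ _] := mcycle_facts (facts F C FF' CF).
  by rewrite mem_Garcs; apply: (allP g).
have sz : size (TA FF) = 10 * m.
  rewrite /TA size_flatten /shape -map_comp.
  have -> : 10 * m = (2 * m) * size FF by rewrite s5; lia.
  elim: FF {s5 hs u hf} s2 facts => [|F FF IH] /=; first by rewrite muln0.
  move=> /andP[/eqP sF sFF] hfa.
  rewrite IH //; last by move=> F' C hF'; apply: hfa; rewrite inE hF' orbT.
  rewrite size_flatten /shape -map_comp.
  case: F sF hfa => [|C1 [|C2 [|]]] //= _ hfa.
  have [_ z1 _ _ _] := mcycle_facts (hfa _ C1 (mem_head _ _) (mem_head _ _)).
  have [_ z2 _ _ _] := mcycle_facts (hfa _ C2 (mem_head _ _) ltac:(by rewrite !inE eqxx orbT)).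
  rewrite z1 z2; lia.
have hz : size (Garcs m) <= size (TA FF) by rewrite sz size_Garcs.
have [_ e] := uniq_min_size u hs hz.
by apply: uniq_perm => //; apply: uniq_Garcs.
Qed.

Definition reps m k (Q : seq vtx) := [seq map (tr m (12 * i)) Q | i <- iota 0 k].
Definition fv m i := tr m (12 * i).
Definition fa m i := trarc m (12 * i).
Definition gar m (a : vtx * vtx) := garc m a.1 a.2.

Lemma path_iota (r : rel nat) a n : (forall i, r i i.+1) -> path r a (iota a.+1 n).
Proof. by move=> h; elim: n a => //= n IH a; rewrite h IH. Qed.

Lemma last_iota a n : last a (iota a.+1 n) = a + n.
Proof. by elim: n a => [|n IH] a /=; rewrite ?addn0 // IH addnS. Qed.

Lemma flat_parcs_reps m k Q :
  flatten (map parcs (reps m k Q)) = Fl (fa m) k (parcs Q).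
Proof.
rewrite /reps /Fl /Flg -map_comp; congr flatten; apply: eq_map => i /=.
by rewrite parcs_map.
Qed.

Lemma flat_nt_reps m k Q :
  flatten (map nonterminal (reps m k Q)) = Fl (fv m) k (nonterminal Q).
Proof.
rewrite /reps /Fl /Flg -map_comp; congr flatten; apply: eq_map => i /=.
by rewrite nt_map.
Qed.

Lemma seg_ok m k A Q : 0 < k -> A != [::] -> Q != [::] -> ohead Q = olast A ->
  olast Q = omap (tr m 12) (ohead Q) -> (forall v, ohead Q = Some v -> v.2 < m) ->
  [/\ all (fun P => P != [::]) (A :: reps m k Q), path lk A (reps m k Q) &
      olast (last A (reps m k Q)) = omap (tr m (12 * k)) (olast A)].
Proof.
move=> k0 nA nQ hAQ hQQ hv.
case: k k0 => // k _.
case hQ : (ohead Q) hAQ hQQ hv => [v|]; last by case: Q nQ hQ.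
move=> hAQ hQQ hv; have vm := hv v erefl.
split.
- apply/allP => P; rewrite inE => /orP[/eqP->//|/mapP[i _ ->]].
  by case: Q nQ {hQ hQQ}.
- set g := fun i => [seq tr m (12 * i) i0 | i0 <- Q].
  rewrite /reps /= (_ : [seq tr m (12 * 0) i | i <- Q] = g 0) // path_map.
  rewrite /lk /g ohead_map hQ /= muln0 tr0 // hAQ eqxx /=.
  apply: path_iota => i /=; rewrite /lk ohead_map olast_map hQQ hQ /=.
  by rewrite tr_tr mulnS.
- set g := fun i => [seq tr m (12 * i) i0 | i0 <- Q].
  rewrite /reps /= (_ : [seq tr m (12 * 0) i | i <- Q] = g 0) // last_map last_iota add0n.
  by rewrite /g olast_map hQQ -hAQ /= tr_tr mulnS.
Qed.

Lemma all_gar_reps m k A Q : all (gar m) (parcs A) -> all (gar m) (parcs Q) ->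
  all (gar m) (parcs A ++ Fl (fa m) k (parcs Q)).
Proof.
move=> hA hQ; rewrite all_cat hA /=; apply/allP => a /mem_Flg[i _ [b bQ ->]].
by apply: garc_tr; apply: (allP hQ).
Qed.

Lemma closed_ok A Ps : all (fun P => P != [::]) (A :: Ps) -> path lk A Ps ->
  olast (last A Ps) = ohead A ->
  [/\ catw (A :: Ps) != [::], parcs (catw (A :: Ps)) = flatten (map parcs (A :: Ps)),
      olast (catw (A :: Ps)) = ohead (catw (A :: Ps)) &
      perm_eq (behead (catw (A :: Ps))) (flatten (map nonterminal (A :: Ps)))].
Proof.
move=> nz pth cl; have [h1 h2 h3 h4] := catw_facts nz pth.
have nA : A != [::] by case/andP: nz.
case hA : (ohead A) => [x0|]; last by move: hA nA; clear; case: A.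
have [xl [e1 e2]] := rot_catw hA nz pth.
split => //.
- by case: (catw _) h2; rewrite hA.
- by rewrite h3 h2.
- rewrite h4; move: e2; rewrite -cl e1 in hA; case: hA => ->.
  by move=> e; rewrite -(perm_cons x0) e perm_catC.
Qed.

Definition segP m (A Q : seq vtx) :=
  [/\ A != [::], Q != [::], ohead Q = olast A, olast Q = omap (tr m 12) (ohead Q) &
      (forall v, ohead Q = Some v -> v.2 < m)] /\ (all (gar m) (parcs A) && all (gar m) (parcs Q)).

Lemma cycle2 m k A Q A' Q' : 0 < k -> segP m A Q -> segP m A' Q' ->
  ohead A' = omap (tr m (12 * k)) (olast A) -> ohead A = omap (tr m (12 * k)) (olast A') ->
  let C := catw ((A :: reps m k Q) ++ (A' :: reps m k Q')) in
  [/\ C != [::], all (gar m) (parcs C), olast C = ohead C,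
      BL (fa m) k (parcs C) (parcs A ++ parcs A') (parcs Q ++ parcs Q') &
      BL (fv m) k (behead C) (nonterminal A ++ nonterminal A') (nonterminal Q ++ nonterminal Q')].
Proof.
move=> k0 [[nA nQ l1 l2 l3] /andP[gA gQ]] [[nA' nQ' l1' l2' l3'] /andP[gA' gQ']] c1 c2 C.
have [s1 s2 s3] := seg_ok k0 nA nQ l1 l2 l3.
have [s1' s2' s3'] := seg_ok k0 nA' nQ' l1' l2' l3'.
have nz : all (fun P => P != [::]) (A :: reps m k Q ++ A' :: reps m k Q').
  by rewrite -cat_cons all_cat s1 s1'.
have pth : path lk A (reps m k Q ++ A' :: reps m k Q').
  by rewrite cat_path s2 /= /lk s3 c1 eqxx s2'.
have cl : olast (last A (reps m k Q ++ A' :: reps m k Q')) = ohead A.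
  by rewrite last_cat /= s3' c2.
have [d1 d2 d3 d4] := closed_ok nz pth cl.
rewrite /C; split => //.
- rewrite d2 -cat_cons map_cat flatten_cat /= !flat_parcs_reps.
  by rewrite all_cat !all_gar_reps.
- rewrite d2 -cat_cons map_cat flatten_cat /= !flat_parcs_reps.
  by apply: BL_cat; rewrite /BL perm_refl.
- apply: BL_perm d4 _.
  rewrite -cat_cons map_cat flatten_cat /= !flat_nt_reps.
  by apply: BL_cat; rewrite /BL perm_refl.
Qed.

Lemma cycle1 m k A Q : 0 < k -> segP m A Q ->
  ohead A = omap (tr m (12 * k)) (olast A) ->
  let C := catw (A :: reps m k Q) in
  [/\ C != [::], all (gar m) (parcs C), olast C = ohead C,
      BL (fa m) k (parcs C) (parcs A) (parcs Q) &
      BL (fv m) k (behead C) (nonterminal A) (nonterminal Q)].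
Proof.
move=> k0 [[nA nQ l1 l2 l3] /andP[gA gQ]] c1 C.
have [s1 s2 s3] := seg_ok k0 nA nQ l1 l2 l3.
have cl : olast (last A (reps m k Q)) = ohead A by rewrite s3 c1.
have [d1 d2 d3 d4] := closed_ok s1 s2 cl.
rewrite /C; split => //.
- by rewrite d2 /= flat_parcs_reps all_gar_reps.
- by rewrite d2 /= flat_parcs_reps /BL perm_refl.
- apply: BL_perm d4 _.
  by rewrite /= flat_nt_reps /BL perm_refl.
Qed.

Definition keyv p (v : vtx) := if v.2 < p then 0 else ((v.2 - p) %/ 12).+1.
Definition keya p (a : vtx * vtx) := keyv p a.1.

Lemma V1_tr m p k i v : m = p + 12 * k -> i < k -> inV1 p v ->
  tr m (12 * i) v = (v.1, v.2 + 12 * i) /\ keyv p (tr m (12 * i) v) = i.+1.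
Proof.
move=> hm ik /andP[h1 h2].
have e : tr m (12 * i) v = (v.1, v.2 + 12 * i) by rewrite /tr modn_small //; lia.
split => //; rewrite e /keyv /=.
have -> : (v.2 + 12 * i < p) = false by lia.
congr S; lia.
Qed.

Definition cycOK m k (C : seq vtx) b q :=
  [/\ C != [::], all (gar m) (parcs C), olast C = ohead C & BL (fv m) k (behead C) b q].

Lemma factor_from m p k C1 C2 b1 q1 b2 q2 : 0 < k -> m = p + 12 * k ->
  cycOK m k C1 b1 q1 -> cycOK m k C2 b2 q2 ->
  size b1 + k * size q1 = m -> size b2 + k * size q2 = m ->
  uniq (b1 ++ b2) -> uniq (q1 ++ q2) -> all (fun v : vtx => v.2 < p) (b1 ++ b2) ->
  all (inV1 p) (q1 ++ q2) -> Cm_factor m [:: C1; C2].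
Proof.
move=> k0 hm [n1 g1 o1 B1] [n2 g2 o2 B2] z1 z2 ub uq kb kq.
have B := BL_cat B1 B2.
have U : uniq (behead C1 ++ behead C2).
  rewrite (perm_uniq B); apply: (uniq_blocks (key := keyv p)) => //.
  - by apply/allP => v /(allP kb) h; rewrite /keyv h.
  - move=> i ik x y /(allP kq) hx /(allP kq) hy.
    rewrite /fv (V1_tr hm ik hx).1 (V1_tr hm ik hy).1.
    by case: x y {hx hy} => a x [b y] [-> e]; congr pair; lia.
  - by move=> i x ik /(allP kq) hx; rewrite /fv (V1_tr hm ik hx).2.
move: (U); rewrite cat_uniq => /and3P[u1 _ u2].
apply: factor2 => //; apply: mcycleP => //.
- by rewrite (size_BL B1).
- by rewrite (size_BL B2).
Qed.

Lemma size_nt P : size (nonterminal P) = len P.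
Proof. by rewrite /nonterminal size_takel // leq_pred. Qed.

Lemma nt_sub P : {subset nonterminal P <= P}.
Proof. by move=> x; rewrite /nonterminal => /mem_take. Qed.

Lemma uniq_flat_nt l : all uniq l -> pw_vdisj l -> uniq (flatten (map nonterminal l)).
Proof.
rewrite /pw_vdisj; elim: l => //= P l IH /andP[uP ul] /andP[dP pl].
rewrite cat_uniq IH // take_uniq //= andbT.
apply/hasPn => x /flattenP[s /mapP[Q Ql ->]] xQ; apply/negP => xP.
have := allP dP Q Ql; rewrite /vdisj => /hasPn /(_ x (nt_sub xP)).
by move/negP; apply; apply: nt_sub.
Qed.

Lemma mem_parcs a P : a \in parcs P -> a.1 \in nonterminal P /\ a.2 \in P.
Proof.
case: P => // x q; rewrite nt_cons.
elim: q x => //= y q IH x; rewrite inE => /orP[/eqP -> /=|/IH[h1 h2]].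
  by rewrite !inE !eqxx orbT.
by rewrite inE h1 orbT inE h2 orbT.
Qed.

Lemma nt_V1 p Q v : ohead Q = Some v -> inV1 p v -> all (inV1 p) (internal Q) ->
  all (inV1 p) (nonterminal Q).
Proof.
case: Q => //= x [|y q] [<-] hv //.
rewrite /internal -/(nonterminal [:: x, y & q]) !nt_cons /= drop0 hv //.
Qed.

Lemma dipath_facts m P : dipath m P -> [/\ P != [::], all (gar m) (parcs P) & uniq P].
Proof. by case: P => // x q /and3P[_ pth u]; rewrite -path_all pth u. Qed.

Lemma C4_facts m p P : p + 2 < m -> C4 m p P ->
  all (fun v : vtx => v.2 < p) (nonterminal P) /\
  exists2 v, olast P = Some v & p <= v.2 <= p + 2.
Proof.
move=> hm /andP[h1 h2]; split => //.
case: (olast P) h2 => // v; rewrite !inE !modn_small; try lia.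
by move=> h; exists v => //; lia.
Qed.

Lemma rho_tr m p k v : 0 < k -> m = p + 12 * k -> rho_inv m p v = tr m (12 * k) v.
Proof.
move=> k0 hm; rewrite /rho_inv /tr (modn_small (_ : p < m)); last by lia.
by have -> : m - p = 12 * k by lia.
Qed.

Definition gq m p (a : vtx * vtx) := inV1 p a.1 && (a.2.2 < m).
Definition gb p (a : vtx * vtx) := a.1.2 < p.

Lemma seg_info m p A Q : p + 12 <= m -> dipath m A -> dipath m Q -> C4 m p A ->
  olast A = ohead Q -> C6 m p Q ->
  [/\ segP m A Q, all (fun v : vtx => v.2 < p) (nonterminal A), all (inV1 p) (nonterminal Q),
      all (gb p) (parcs A) & all (gq m p) (parcs Q)].
Proof.
move=> hm dA dQ c4 c5 /andP[/eqP c6 c6i].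
have [nA gA uA] := dipath_facts dA; have [nQ gQ uQ] := dipath_facts dQ.
have hm2 : p + 2 < m by clear -hm; lia.
have [ntA [w ew hw]] := C4_facts hm2 c4.
have hQv : ohead Q = Some w by rewrite -c5.
have ntQ : all (inV1 p) (nonterminal Q).
  by apply: (nt_V1 hQv) => //; rewrite /inV1; clear -hw; lia.
split => //.
- split; last by rewrite gA gQ.
  split => //.
  by move=> v; rewrite hQv => -[<-]; clear -hw hm2; lia.
- by apply/allP => a /mem_parcs [h _]; apply: (allP ntA).
- apply/allP => a ha; have [h1 h2] := mem_parcs ha.
  rewrite /gq (allP ntQ _ h1) /=.
  by have [] := garc_valid (allP gQ _ ha).
Qed.

Lemma omap_rho m p k o : 0 < k -> m = p + 12 * k ->
  omap (rho_inv m p) o = omap (tr m (12 * k)) o.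
Proof. by move=> k0 hm; case: o => //= v; rewrite (rho_tr v k0 hm). Qed.

Lemma type2_fac m p k W X Y Z Q R S T : 0 < k -> m = p + 12 * k ->
  type2_basic m p k (Basic2 W X Y Z Q R S T) ->
  exists C1 C2, [/\ Cm_factor m [:: C1; C2],
    BL (fa m) k (flatten [seq parcs C | C <- [:: C1; C2]])
       ((parcs W ++ parcs X) ++ (parcs Y ++ parcs Z)) ((parcs Q ++ parcs R) ++ (parcs S ++ parcs T)),
    all (gb p) ((parcs W ++ parcs X) ++ (parcs Y ++ parcs Z)) &
    all (gq m p) ((parcs Q ++ parcs R) ++ (parcs S ++ parcs T))].
Proof.
move=> k0 hm.
move=> [[/and5P[dQ dR dS dT _] pwQ] [hWd [c2a c2b c2c c2d] [l1 [l2 l3]] c4 [[c5a c5b c5c c5d] c6]]].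
rewrite k0 in hWd l3; move: (c6 k0) => {c6} /and5P[c6Q c6R c6S c6T _].
move: hWd => /andP[/and5P[dW dX dY dZ _] pwW].
move: c4 => /and5P[c4W c4X c4Y c4Z _].
have hm12 : p + 12 <= m by clear -k0 hm; lia.
have [sWQ nW nQ bW qQ] := seg_info hm12 dW dQ c4W c5a c6Q.
have [sXR nX nR bX qR] := seg_info hm12 dX dR c4X c5b c6R.
have [sYS nY nS bY qS] := seg_info hm12 dY dS c4Y c5c c6S.
have [sZT nZ nT bZ qT] := seg_info hm12 dZ dT c4Z c5d c6T.
rewrite !(omap_rho _ k0 hm) in c2a c2b c2c c2d.
have [e1 e2 e3 e4 e5] := cycle2 k0 sWQ sXR c2a c2b.
have [f1 f2 f3 f4 f5] := cycle2 k0 sYS sZT c2c c2d.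
set C1 := catw _ in e1 e2 e3 e4 e5.
set C2 := catw _ in f1 f2 f3 f4 f5.
exists C1, C2; split.
- apply: (factor_from (p := p) k0 hm (And4 e1 e2 e3 e5) (And4 f1 f2 f3 f5)).
  + by rewrite !size_cat !size_nt l1; case: l3 => -> _; clear -hm; lia.
  + by rewrite !size_cat !size_nt l2; case: l3 => _ ->; clear -hm; lia.
  + have := uniq_flat_nt (l := [:: W; X; Y; Z]).
    rewrite /= cats0 !catA => -> //.
    have [_ _ uW] := dipath_facts dW; have [_ _ uX] := dipath_facts dX.
    have [_ _ uY] := dipath_facts dY; have [_ _ uZ] := dipath_facts dZ.
    by rewrite uW uX uY uZ.
  + have := uniq_flat_nt (l := [:: Q; R; S; T]).
    rewrite /= cats0 !catA => -> //.
    have [_ _ uW] := dipath_facts dQ; have [_ _ uX] := dipath_facts dR.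
    have [_ _ uY] := dipath_facts dS; have [_ _ uZ] := dipath_facts dT.
    by rewrite uW uX uY uZ.
  + by rewrite !all_cat nW nX nY nZ.
  + by rewrite !all_cat nQ nR nS nT.
- by rewrite /= cats0; apply: BL_cat.
- by rewrite !all_cat bW bX bY bZ.
- by rewrite !all_cat qQ qR qS qT.
Qed.

Lemma type1_fac m p k X Y R S : 0 < k -> m = p + 12 * k ->
  type1_basic m p k (Basic1 X Y R S) ->
  exists C1 C2, [/\ Cm_factor m [:: C1; C2],
    BL (fa m) k (flatten [seq parcs C | C <- [:: C1; C2]])
       (parcs X ++ parcs Y) (parcs R ++ parcs S),
    all (gb p) (parcs X ++ parcs Y) &
    all (gq m p) (parcs R ++ parcs S)].
Proof.
move=> k0 hm.
move=> [[/and3P[dR dS _] vRS] [hXd [c2a c2b] [l1 [l2 l3]] c4 [[c5a c5b] c6]]].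
rewrite k0 in hXd l3; move: (c6 k0) => {c6} /and3P[c6R c6S _].
move: hXd => /and3P[dX dY vXY].
move: c4 => /and3P[c4X c4Y _].
have hm12 : p + 12 <= m by clear -k0 hm; lia.
have [sXR nX nR bX qR] := seg_info hm12 dX dR c4X c5a c6R.
have [sYS nY nS bY qS] := seg_info hm12 dY dS c4Y c5b c6S.
rewrite !(omap_rho _ k0 hm) in c2a c2b.
have [e1 e2 e3 e4 e5] := cycle1 k0 sXR c2a.
have [f1 f2 f3 f4 f5] := cycle1 k0 sYS c2b.
set C1 := catw _ in e1 e2 e3 e4 e5.
set C2 := catw _ in f1 f2 f3 f4 f5.
exists C1, C2; split.
- apply: (factor_from (p := p) k0 hm (And4 e1 e2 e3 e5) (And4 f1 f2 f3 f5)).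
  + by rewrite !size_nt l1; case: l3 => -> _; clear -hm; lia.
  + by rewrite !size_nt l2; case: l3 => _ ->; clear -hm; lia.
  + have := uniq_flat_nt (l := [:: X; Y]).
    rewrite /= cats0 => -> //; last by rewrite /pw_vdisj /= vXY.
    have [_ _ uW] := dipath_facts dX; have [_ _ uX] := dipath_facts dY.
    by rewrite uW uX.
  + have := uniq_flat_nt (l := [:: R; S]).
    rewrite /= cats0 => -> //; last by rewrite /pw_vdisj /= vRS.
    have [_ _ uW] := dipath_facts dR; have [_ _ uX] := dipath_facts dS.
    by rewrite uW uX.
  + by rewrite !all_cat nX nY.
  + by rewrite !all_cat nR nS.
- by rewrite /= cats0; apply: BL_cat.
- by rewrite !all_cat bX bY.
- by rewrite !all_cat qR qS.
Qed.

Lemma parcs_len0 Q : len Q = 0 -> parcs Q = [::].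
Proof. by move=> h; apply/eqP; rewrite -size_eq0 size_parcs size_behead -/(len Q) h. Qed.

Lemma C4_valid m p P : 0 < m -> C4 m p P -> exists2 w, olast P = Some w & w.2 < m.
Proof.
move=> m0 /andP[_]; case: (olast P) => // w; rewrite !inE => h; exists w => //.
by case/or3P: h => /eqP ->; rewrite ltn_pmod.
Qed.

Lemma link0 m W X : 0 < m -> C4 m m W -> ohead X = omap (rho_inv m m) (olast W) ->
  parcs (pcat W X) = parcs W ++ parcs X.
Proof.
move=> m0 c4 c2; have [w ew wm] := C4_valid m0 c4.
apply: parcs_pcat; rewrite c2 ew /= /rho_inv modnn subn0 modnDr modn_small //.
by case: w {ew wm}.
Qed.

Lemma factor0 m C1 C2 : mcycle m C1 -> mcycle m C2 -> vdisj C1 C2 -> Cm_factor m [:: C1; C2].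
Proof.
move=> h1 h2 v; apply: factor2 => //.
have [_ _ u1 _ _] := mcycle_facts h1; have [_ _ u2 _ _] := mcycle_facts h2.
rewrite cat_uniq u1 u2 /= andbT; apply/hasPn => x x2; apply/negP => x1.
move: v; rewrite /vdisj => /hasPn /(_ x (mem_behead x1)) /negP; apply; exact: mem_behead.
Qed.

Lemma type2_fac0 m p W X Y Z Q R S T : m = p + 12 * 0 -> 0 < m ->
  type2_basic m p 0 (Basic2 W X Y Z Q R S T) ->
  exists C1 C2, Cm_factor m [:: C1; C2] /\
    flatten [seq parcs C | C <- [:: C1; C2]] =
    flatten (map parcs (objs2 (Basic2 W X Y Z Q R S T))).
Proof.
rewrite muln0 addn0 => hm m0; subst p.
move=> [_ [/and3P[t1 t2 v] [c2a c2b c2c c2d] [l1 [l2 [q0 r0 s0 t0]]] /and5P[c4W c4X c4Y c4Z _] _]].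
exists (pcat W X), (pcat Y Z); split.
  by apply: factor0 => //; [case/andP: t1 | case/andP: t2].
rewrite /= (link0 m0 c4W c2a) (link0 m0 c4Y c2c) (parcs_len0 q0) (parcs_len0 r0) (parcs_len0 s0) (parcs_len0 t0).
by rewrite !cats0 !catA.
Qed.

Lemma type1_fac0 m p X Y R S : m = p + 12 * 0 -> 0 < m ->
  type1_basic m p 0 (Basic1 X Y R S) ->
  exists C1 C2, Cm_factor m [:: C1; C2] /\
    flatten [seq parcs C | C <- [:: C1; C2]] =
    flatten (map parcs (objs1 (Basic1 X Y R S))).
Proof.
rewrite muln0 addn0 => hm m0; subst p.
move=> [_ [/and3P[t1 t2 v] _ [_ [_ [r0 s0]]] _ _]].
exists X, Y; split.
  by apply: factor0 => //; [case/andP: t1 | case/andP: t2].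
by rewrite /= (parcs_len0 r0) (parcs_len0 s0) !cats0.
Qed.

Lemma perm_bq (T : eqType) (b q B Q X : seq T) : perm_eq X (B ++ Q) ->
  perm_eq ((b ++ q) ++ X) ((b ++ B) ++ (q ++ Q)).
Proof.
move=> h; apply: ptr (perm_cat (perm_refl (b ++ q)) h) _.
by rewrite perm_catACA.
Qed.

Lemma tr_inj2 m j x y : x < m -> y < m -> (x + j) %% m = (y + j) %% m -> x = y.
Proof.
move=> hx hy /eqP; rewrite eqn_modDr => /eqP.
by rewrite !modn_small.
Qed.

Lemma uniq_arcs m p k b q : 0 < k -> m = p + 12 * k -> uniq (b ++ q) -> all (gb p) b ->
  all (gq m p) q -> uniq (b ++ Fl (fa m) k q).
Proof.
move=> k0 hm u hb hq; move: u; rewrite cat_uniq => /and3P[ub _ uq].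
apply: (uniq_blocks (key := keya p)) => //.
- by apply/allP => a /(allP hb); rewrite /gb /keya /keyv => ->.
- move=> i ik [[u1 x1] [u2 x2]] [[v1 y1] [v2 y2]].
  move=> /(allP hq) /andP[/andP[_ ha1] ha2] /(allP hq) /andP[/andP[_ hb1] hb2].
  rewrite /fa /trarc /tr /= => -[e1 e2 e3 e4].
  have t1 : x1 < m by clear -hm k0 ha1; simpl in ha1; lia.
  have t2 : y1 < m by clear -hm k0 hb1; simpl in hb1; lia.
  have f2 := tr_inj2 t1 t2 e2; have f4 := tr_inj2 ha2 hb2 e4.
  by simpl in f4; rewrite e1 f2 e3 f4.
- move=> i [a1 a2] ik /(allP hq) /andP[ha1 _].
  by rewrite /keya /fa /trarc /= (V1_tr hm ik ha1).2.
Qed.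

Theorem mainTheorem7 (p k m : nat) :
  p \in [:: 11; 13; 17; 19] ->
  m = p + 12 * k ->
  (exists (A1 A2 A3 : basic2) (B1 B2 : basic1),
      [/\ type2_basic m p k A1, type2_basic m p k A2, type2_basic m p k A3,
          type1_basic m p k B1 /\ type1_basic m p k B2 &
          uniq (flatten [seq parcs P | P <- objs2 A1 ++ objs2 A2 ++ objs2 A3
                                             ++ objs1 B1 ++ objs1 B2])]) ->
  exists FF : seq (seq (seq vtx)), Cm_factorization m FF.
Proof.
move=> hp hm [A1 [A2 [A3 [B1 [B2 [h1 h2 h3 [h4 h5] hu]]]]]].
have p11 : 10 < p by move: hp; rewrite !inE => /or4P[] /eqP ->.
have m3 : 3 < m by rewrite hm; clear -p11; lia.
move: A1 A2 A3 B1 B2 h1 h2 h3 h4 h5 hu => [W1 X1 Y1 Z1 Q1 R1 S1 T1] [W2 X2 Y2 Z2 Q2 R2 S2 T2]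
  [W3 X3 Y3 Z3 Q3 R3 S3 T3] [X4 Y4 R4 S4] [X5 Y5 R5 S5] h1 h2 h3 h4 h5 hu.
rewrite !map_cat !flatten_cat in hu.
case: (posnP k) => [k0|k0].
- subst k; have m0 : 0 < m by clear -m3; lia.
  have [C11 [C12 [f1 e1]]] := type2_fac0 hm m0 h1.
  have [C21 [C22 [f2 e2]]] := type2_fac0 hm m0 h2.
  have [C31 [C32 [f3 e3]]] := type2_fac0 hm m0 h3.
  have [C41 [C42 [f4 e4]]] := type1_fac0 hm m0 h4.
  have [C51 [C52 [f5 e5]]] := type1_fac0 hm m0 h5.
  exists [:: [:: C11; C12]; [:: C21; C22]; [:: C31; C32]; [:: C41; C42]; [:: C51; C52]].
  apply: final => //; first by rewrite /= f1 f2 f3 f4 f5.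
  rewrite (_ : TA _ = flatten [seq parcs C | C <- [:: C11; C12]] ++
     (flatten [seq parcs C | C <- [:: C21; C22]] ++ (flatten [seq parcs C | C <- [:: C31; C32]] ++
     (flatten [seq parcs C | C <- [:: C41; C42]] ++ flatten [seq parcs C | C <- [:: C51; C52]])))).
    by rewrite e1 e2 e3 e4 e5.
  by rewrite /TA /= !cats0.
- have [C11 [C12 [f1 g1 b1 q1]]] := type2_fac k0 hm h1.
  have [C21 [C22 [f2 g2 b2 q2]]] := type2_fac k0 hm h2.
  have [C31 [C32 [f3 g3 b3 q3]]] := type2_fac k0 hm h3.
  have [C41 [C42 [f4 g4 b4 q4]]] := type1_fac k0 hm h4.
  have [C51 [C52 [f5 g5 b5 q5]]] := type1_fac k0 hm h5.
  exists [:: [:: C11; C12]; [:: C21; C22]; [:: C31; C32]; [:: C41; C42]; [:: C51; C52]].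
  apply: final => //; first by rewrite /= f1 f2 f3 f4 f5.
  have B := BL_cat g1 (BL_cat g2 (BL_cat g3 (BL_cat g4 g5))).
  rewrite (_ : TA _ = flatten [seq parcs C | C <- [:: C11; C12]] ++
     (flatten [seq parcs C | C <- [:: C21; C22]] ++ (flatten [seq parcs C | C <- [:: C31; C32]] ++
     (flatten [seq parcs C | C <- [:: C41; C42]] ++ flatten [seq parcs C | C <- [:: C51; C52]])))); last first.
    by rewrite /TA /= !cats0.
  rewrite (perm_uniq B); apply: uniq_arcs k0 hm _ _ _; last by rewrite all_cat q1 all_cat q2 all_cat q3 all_cat q4 q5.
    rewrite -(perm_uniq (perm_bq _ _ (perm_bq _ _ (perm_bq _ _ (perm_bq _ _ (perm_refl (_ ++ _))))))).
    by move: hu; rewrite /= !cats0 !catA.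
  by rewrite all_cat b1 all_cat b2 all_cat b3 all_cat b4 b5.
Qed.
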